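(* For all $n\ge1$, \[ \sum_{\sigma\in\mathcal{R}_{2n}} t^{\mathrm{drop}(\sigma)}=\sum_{j=0}^{\lfloor n/2\rfloor}\gamma_{n,j}\,t^j(1+t)^{n-2j}, \] where $\gamma_{n,j}$ is the number of primary even-odd-drop permutations in $\mathcal{R}_{2n}$ with $j$ drops.
   Context: For $\sigma\in\mathfrak{S}_m$, a drop is a pair $(i,\sigma_i)$ with $i>\sigma_i$; $i$ is the drop top and $\sigma_i$ the drop bottom; $\mathrm{drop}(\sigma)$ is the number of drops. A drop is even-odd if $i$ is even and $\sigma_i$ is odd. $\mathcal{R}_{2n}$ is the set of permutations of $[2n]$ all of whose drops are even-odd. $\sigma\in\mathcal{R}_{2n}$ with drop tops $\{t_1,\dots,t_k\}$ and drop bottoms $\{b_1,\dots,b_k\}$ is a primary even-odd-drop permutation if for all $i,j$, $t_i>b_j$ implies $t_i-b_j\ge3$. *)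

(* Defs.v *)
(* Permutations of [m] = {1..m} are modelled by 'S_m acting on
   'I_m = {0..m-1}; the element k : 'I_m stands for the integer k+1. *)
From HB Require Import structures.
From mathcomp Require Import all_boot all_order all_algebra all_fingroup.
Set Implicit Arguments. Unset Strict Implicit. Unset Printing Implicit Defensive.

Definition pos1 {m} (i : 'I_m) : nat := i.+1.
Definition val1 {m} (s : 'S_m) (i : 'I_m) : nat := (s i).+1.

Definition is_drop {m} (s : 'S_m) (i : 'I_m) : bool := val1 s i < pos1 i.

Definition drop_num {m} (s : 'S_m) : nat := #|[set i : 'I_m | is_drop s i]|.

Definition even_odd_drop {m} (s : 'S_m) (i : 'I_m) : bool :=
  [&& is_drop s i, ~~ odd (pos1 i) & odd (val1 s i)].

Definition in_R (n : nat) (s : 'S_(n.*2)) : bool :=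
  [forall i, is_drop s i ==> even_odd_drop s i].

Definition primary (n : nat) (s : 'S_(n.*2)) : bool :=
  in_R s &&
  [forall i, forall j, (is_drop s i && is_drop s j) ==>
     ((val1 s j < pos1 i) ==> (3 <= pos1 i - val1 s j))].

Definition gamma (n j : nat) : nat :=
  #|[set s : 'S_(n.*2) | primary s & drop_num s == j]|.

(* Main.v *)
Require Import Defs.
From HB Require Import structures.
From mathcomp Require Import all_boot all_order all_algebra all_fingroup.
From mathcomp Require Import zify.
Import GRing.Theory.
Set Implicit Arguments. Unset Strict Implicit. Unset Printing Implicit Defensive.

Lemma is_dropE m (s : 'S_m) i : is_drop s i = (s i < i)%N.
Proof. by rewrite /is_drop /val1 /pos1 ltnS. Qed.

Lemma in_RP n (s : 'S_(n.*2)) : in_R s ->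
  forall i, is_drop s i -> odd i /\ ~~ odd (s i).
Proof.
move=> /forallP H i Hd; have := H i; rewrite Hd /= /even_odd_drop /pos1 /val1 Hd /=.
by case/andP; rewrite /= negbK => -> ->.
Qed.

Lemma in_RI n (s : 'S_(n.*2)) :
  (forall i, is_drop s i -> odd i /\ ~~ odd (s i)) -> in_R s.
Proof.
move=> H; apply/forallP => i; apply/implyP => Hd; have [H1 H2] := H i Hd.
by rewrite /even_odd_drop Hd /pos1 /val1 /= H1 H2.
Qed.

Lemma top_lt n (k : 'I_n) : (k.*2.+1 < n.*2)%N.
Proof. have := ltn_ord k; rewrite -!muln2; lia. Qed.
Lemma bot_lt n (k : 'I_n) : (k.*2 < n.*2)%N.
Proof. have := ltn_ord k; rewrite -!muln2; lia. Qed.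
Lemma pr_lt n (i : 'I_(n.*2)) : (i./2 < n)%N.
Proof. have := ltn_ord i; move: (val i) => x; rewrite -{1}(odd_double_half x) -!muln2; case: (odd x) => /=; lia. Qed.

Definition top n (k : 'I_n) : 'I_(n.*2) := Ordinal (top_lt k).
Definition bot n (k : 'I_n) : 'I_(n.*2) := Ordinal (bot_lt k).
Definition pr n (i : 'I_(n.*2)) : 'I_n := Ordinal (pr_lt i).

Lemma top_inj n : injective (@top n).
Proof. move=> a b /(congr1 val) /= H; apply: val_inj => /=; rewrite -!muln2 in H; lia. Qed.
Lemma bot_inj n : injective (@bot n).
Proof. move=> a b /(congr1 val) /= H; apply: val_inj => /=; rewrite -!muln2 in H; lia. Qed.
Lemma top_odd n (i : 'I_(n.*2)) : odd i -> i = top (@pr n i).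
Proof. move=> Hi; apply: val_inj => /=; by rewrite -{1}(odd_double_half i) Hi. Qed.
Lemma bot_even n (i : 'I_(n.*2)) : ~~ odd i -> i = bot (@pr n i).
Proof. move=> Hi; apply: val_inj => /=; by rewrite -{1}(odd_double_half i) (negbTE Hi). Qed.
Lemma topE n k : val (@top n k) = k.*2.+1. Proof. by []. Qed.
Lemma botE n k : val (@bot n k) = k.*2. Proof. by []. Qed.
Lemma top_eq n k k' : (@top n k == top k') = (k == k').
Proof. by apply/eqP/eqP => [/top_inj|->]. Qed.
Lemma bot_eq n k k' : (@bot n k == bot k') = (k == k').
Proof. by apply/eqP/eqP => [/bot_inj|->]. Qed.

Definition tops m (s : 'S_m) := [set i | is_drop s i].
Definition bots m (s : 'S_m) := [set s i | i in tops s].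
Definition st n (s : 'S_(n.*2)) : {ffun 'I_n -> bool * bool} :=
  [ffun k => (top k \in tops s, bot k \in bots s)].
Definition upd1 n (c : {ffun 'I_n -> bool * bool}) k :=
  [ffun k' => if k' == k then (true, true) else c k'].

Lemma in_bots m (s : 'S_m) v : (v \in bots s) = is_drop s ((s^-1)%g v).
Proof.
apply/imsetP/idP => [[i]|H]; first by rewrite inE => Hi ->; rewrite permK.
by exists ((s^-1)%g v); rewrite ?inE ?permKV.
Qed.

Lemma LA n (s : 'S_(n.*2)) (k : 'I_n) (y : 'I_(n.*2)) :
  (y <= s y)%N -> s y = bot k -> (top k <= s (top k))%N ->
  [/\ in_R (tperm y (top k) * s)%g = in_R s,
      st (tperm y (top k) * s)%g = upd1 (st s) k &
      st s k = (false, false)].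
Proof.
set t := top k => Hy Hsy Ht.
have ytn : y != t by apply/eqP => E; move: Hy Ht; rewrite Hsy E /t ?topE ?botE /=; lia.
set s' := (tperm y t * s)%g.
have s'E x : s' x = s (tperm y t x) by rewrite permM.
have dropE x : is_drop s' x = (x == t) || is_drop s x.
  rewrite !is_dropE s'E; case: (tpermP y t x) => [->|->|/eqP xy /eqP xt].
  - by rewrite (negbTE ytn) /=; move: Hy Ht; rewrite Hsy /t ?topE ?botE /=; lia.
  - by rewrite eqxx Hsy /t ?topE ?botE /=; lia.
  - by rewrite (negbTE xt).
have Dy : ~~ is_drop s y by rewrite is_dropE -leqNgt.
have Dt : ~~ is_drop s t by rewrite is_dropE -leqNgt.
have sv' x : is_drop s x -> s' x = s x.
  move=> Hx; rewrite s'E tpermD //; apply/eqP => E; move: Hx; rewrite -E.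
    by rewrite (negbTE Dy). by rewrite (negbTE Dt).
have bE v : (v \in bots s') = (v == bot k) || (v \in bots s).
  apply/imsetP/idP => [[i]|].
    rewrite inE dropE => /orP [/eqP ->|Hi] ->.
      by rewrite s'E tpermR Hsy eqxx.
    by rewrite sv' //; apply/orP; right; apply: imset_f; rewrite inE.
  case/orP => [/eqP ->|/imsetP [i Hi ->]].
    by exists t; rewrite ?inE ?dropE ?eqxx // s'E tpermR.
  exists i; first by rewrite inE dropE; move: Hi; rewrite inE => ->; rewrite orbT.
  by rewrite sv' //; move: Hi; rewrite inE.
split.
- apply/idP/idP => HR; apply: in_RI => x Hx.
    have Hx' : is_drop s' x by rewrite dropE Hx orbT.
    by have := in_RP HR Hx'; rewrite sv'.
  move: Hx; rewrite dropE => /orP [/eqP ->|Hx].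
    by rewrite s'E tpermR Hsy /t ?topE ?botE /= odd_double.
  by rewrite sv' //; apply: in_RP.
- apply/ffunP => k'; rewrite !ffunE inE dropE bE /t top_eq bot_eq inE.
  by case: (k' == k).
- rewrite ffunE inE (negbTE Dt); congr (_, _).
  rewrite in_bots; apply/negbTE; rewrite -Hsy permK //.
Qed.

Lemma tpermKg m (a b : 'I_m) (s : 'S_m) : (tperm a b * (tperm a b * s))%g = s.
Proof. by rewrite mulgA tperm2 mul1g. Qed.

Lemma LB_R n (s : 'S_(n.*2)) (t p : 'I_(n.*2)) :
  (s t < t)%N -> (t <= p)%N -> (s p < t)%N ->
  in_R s -> in_R (tperm t p * s)%g.
Proof.
move=> H1 H2 H3 HR; set s' := (tperm t p * s)%g.
have s'E x : s' x = s (tperm t p x) by rewrite permM.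
have Dt : is_drop s t by rewrite is_dropE.
have Dp : is_drop s p by rewrite is_dropE; lia.
apply: in_RI => x; rewrite s'E; case: (tpermP t p x) => [->|->|/eqP xt /eqP xp] Hx.
- by have [? _] := in_RP HR Dt; have [_ ?] := in_RP HR Dp.
- by have [? _] := in_RP HR Dp; have [_ ?] := in_RP HR Dt.
- apply: (in_RP HR); move: Hx; by rewrite !is_dropE s'E tpermD // eq_sym.
Qed.

Lemma LB n (s : 'S_(n.*2)) (t p : 'I_(n.*2)) :
  (s t < t)%N -> (t <= p)%N -> (s p < t)%N ->
  in_R (tperm t p * s)%g = in_R s /\ st (tperm t p * s)%g = st s.
Proof.
move=> H1 H2 H3; set s' := (tperm t p * s)%g.
have s'E x : s' x = s (tperm t p x) by rewrite permM.
have dropE x : is_drop s' x = is_drop s x.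
  rewrite !is_dropE s'E; case: (tpermP t p x) => [->|->|/eqP xt /eqP xp]; lia.
split.
  apply/idP/idP; last exact: LB_R.
  move=> HR; rewrite -(tpermKg t p s); apply: LB_R => //; rewrite -/s' s'E.
  - by rewrite tpermL. - by rewrite tpermR.
have Dt : is_drop s t by rewrite is_dropE.
have Dp : is_drop s p by rewrite is_dropE; lia.
apply/ffunP => k; rewrite !ffunE !inE dropE !in_bots dropE.
congr (_, _); rewrite /s' invgM permM tpermV.
case: (tpermP t p ((s^-1)%g (bot k))) => [->|->|//].
- by rewrite Dt Dp.
- by rewrite Dt Dp.
Qed.

Lemma balance m (u : 'S_m) (t : nat) :
  #|[set y : 'I_m | (y < t)%N & (t <= u y)%N]| = #|[set p : 'I_m | (t <= p)%N & (u p < t)%N]|.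
Proof.
set L := [set x : 'I_m | (x < t)%N].
set P := u @^-1: L.
have E1 : [set y : 'I_m | (y < t)%N & (t <= u y)%N] = L :\: P.
  by apply/setP => x; rewrite !inE -leqNgt andbC.
have E2 : [set p : 'I_m | (t <= p)%N & (u p < t)%N] = P :\: L.
  by apply/setP => x; rewrite !inE -leqNgt andbC.
rewrite E1 E2.
have H1 := cardsID P L; have H2 := cardsID L P.
have H3 : #|P| = #|L| by apply: card_preimset; exact: perm_inj.
rewrite setIC in H2; apply/eqP; rewrite -(eqn_add2l #|L :&: P|) H1 H2 H3; exact: eqxx.
Qed.

Definition Fc n (c : {ffun 'I_n -> bool * bool}) :=
  #|[set s : 'S_(n.*2) | in_R s & st s == c]|.

Lemma card_fiber (T U : finType) (S : {set T}) (N : {set U}) (f : T -> U) :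
  (forall s, s \in S -> f s \in N) ->
  #|S| = \sum_(u in N) #|[set s in S | f s == u]|.
Proof.
move=> H; rewrite -sum1_card (partition_big f (mem N)) //=.
by apply: eq_bigr => u _; rewrite -sum1_card; apply: eq_bigl => s; rewrite inE.
Qed.

Lemma st_k n (s : 'S_(n.*2)) k : st s k = (top k \in tops s, bot k \in bots s).
Proof. by rewrite ffunE. Qed.

Lemma Finv n (c : {ffun 'I_n -> bool * bool}) k :
  c k = (false, false) -> Fc (upd1 c k) = Fc c.
Proof.
move=> Hck; set t := top k; set b := bot k.
have tb : nat_of_ord t = (nat_of_ord b).+1 by [].
set N := [set s : 'S_(n.*2) | (in_R s && (st s == upd1 c k)) && (s t == b)].
pose g (u : 'S_(n.*2)) := #|[set y : 'I_(n.*2) | (y < t)%N & (t <= u y)%N]|.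
pose h (u : 'S_(n.*2)) := #|[set p : 'I_(n.*2) | (t <= p)%N & (u p < t)%N]|.
have upd_k c' : upd1 c' k k = (true, true) by rewrite ffunE eqxx.
have S0 : Fc c = \sum_(u in N) g u.
  rewrite /Fc (card_fiber (f := fun s : 'S_(n.*2) => (tperm ((s^-1)%g b) t * s)%g) (N := N)).
    apply: eq_bigr => u Hu; rewrite /g.
    move: Hu; rewrite inE => /andP [/andP [HRu /eqP Hstu] /eqP Hut].
    rewrite -(card_imset _ (f := fun y => (tperm y t * u)%g)); last first.
      move=> y1 y2 /= /(mulIg u) E; move: (congr1 (fun q : 'S_(n.*2) => q t) E).
      by rewrite !tpermR.
    apply: eq_card => s; rewrite !inE; apply/idP/imsetP.
    + case/andP => /andP [HR /eqP Hst] /eqP Hphi.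
      set y := (s^-1)%g b in Hphi; exists y.
        have Hsy : s y = b by rewrite permKV.
        have := st_k s k; rewrite Hst Hck => -[/esym/negbT Dt /esym/negbT Db].
        move: Dt Db; rewrite in_bots !inE !is_dropE -!leqNgt -/y Hsy -/t => Dt Db.
        rewrite -Hphi permM tpermL; apply/andP; split => //; lia.
      by rewrite -Hphi tpermKg.
    + case=> y; rewrite inE => /andP [Hy1 Hy2] ->.
      set s1 := (tperm y t * u)%g.
      have Hsy : s1 y = b by rewrite permM tpermL.
      have Hst : (t <= s1 t)%N by rewrite permM tpermR.
      have [E1 E2 E3] := LA (s := s1) (k := k) (y := y) ltac:(rewrite Hsy; lia) Hsy Hst.
      rewrite tpermKg in E1 E2.
      have -> : (s1^-1)%g b = y by rewrite -Hsy permK.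
      rewrite tpermKg eqxx andbT -E1 HRu /=; apply/eqP/ffunP => k'.
      move/ffunP: E2 => /(_ k'); rewrite Hstu [upd1 c k k']ffunE [upd1 (st s1) k k']ffunE.
      by case: eqP => [->|//]; rewrite E3 Hck.
  move=> s; rewrite !inE => /andP [HR /eqP Hst].
  set y := (s^-1)%g b.
  have Hsy : s y = b by rewrite permKV.
  have := st_k s k; rewrite Hst Hck => -[/esym/negbT Dt /esym/negbT Db].
  move: Dt Db; rewrite in_bots !inE !is_dropE -!leqNgt -/y Hsy -/t => Dt Db.
  have [E1 E2 E3] := LA (s := s) (k := k) (y := y) ltac:(rewrite Hsy; lia) Hsy Dt.
  by rewrite E1 E2 Hst HR eqxx permM tpermR Hsy eqxx.
have S1 : Fc (upd1 c k) = \sum_(u in N) h u.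
  rewrite /Fc (card_fiber (f := fun s : 'S_(n.*2) => (tperm t ((s^-1)%g b) * s)%g) (N := N)).
    apply: eq_bigr => u Hu; rewrite /h.
    move: Hu; rewrite inE => /andP [/andP [HRu /eqP Hstu] /eqP Hut].
    rewrite -(card_imset _ (f := fun p => (tperm t p * u)%g)); last first.
      move=> y1 y2 /= /(mulIg u) E; move: (congr1 (fun q : 'S_(n.*2) => q t) E).
      by rewrite !tpermL.
    apply: eq_card => s; rewrite !inE; apply/idP/imsetP.
    + case/andP => /andP [HR /eqP Hst] /eqP Hphi.
      set p := (s^-1)%g b in Hphi; exists p.
        have Hsp : s p = b by rewrite permKV.
        have := st_k s k; rewrite Hst upd_k => -[/esym Dt /esym Db].
        move: Dt Db; rewrite in_bots !inE !is_dropE -/p Hsp -/t => Dt Db.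
        rewrite -Hphi permM tpermR; apply/andP; split => //; lia.
      by rewrite -Hphi tpermKg.
    + case=> p; rewrite inE => /andP [Hp1 Hp2] ->.
      have [E1 E2] := LB (s := u) (t := t) (p := p) ltac:(rewrite Hut; lia) Hp1 Hp2.
      have -> : ((tperm t p * u)^-1)%g b = p.
        by apply: (perm_inj (s := (tperm t p * u)%g)); rewrite permKV permM tpermR Hut.
      by rewrite tpermKg eqxx andbT E1 E2 HRu Hstu eqxx.
  move=> s; rewrite !inE => /andP [HR /eqP Hst].
  set p := (s^-1)%g b.
  have Hsp : s p = b by rewrite permKV.
  have := st_k s k; rewrite Hst upd_k => -[/esym Dt /esym Db].
  move: Dt Db; rewrite in_bots !inE !is_dropE -/p Hsp -/t => Dt Db.
  have [E1 E2] := LB (s := s) (t := t) (p := p) Dt ltac:(lia) ltac:(rewrite Hsp; lia).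
  by rewrite E1 E2 Hst HR eqxx permM tpermL Hsp eqxx.
rewrite S0 S1; apply: eq_bigr => u _; rewrite /g /h; symmetry; exact: balance.
Qed.

Definition core n (c : {ffun 'I_n -> bool * bool}) : {ffun 'I_n -> bool * bool} :=
  [ffun k => if c k == (true, true) then (false, false) else c k].
Definition noAB n (c : {ffun 'I_n -> bool * bool}) := [forall k, c k != (true, true)].
Definition n1 n (c : {ffun 'I_n -> bool * bool}) := #|[set k | (c k).1]|.
Definition n2 n (c : {ffun 'I_n -> bool * bool}) := #|[set k | (c k).2]|.
Definition nN n (c : {ffun 'I_n -> bool * bool}) := #|[set k | ~~ (c k).1 && ~~ (c k).2]|.

Lemma F_core n (c : {ffun 'I_n -> bool * bool}) : Fc c = Fc (core c).
Proof.
move Em : #|[set k | c k == (true, true)]| => m; elim: m c Em => [|m IH] c Em.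
  congr Fc; apply/ffunP => k; rewrite ffunE; case: eqP => // E.
  by move: Em => /eqP; rewrite cards_eq0 => /eqP /setP /(_ k); rewrite !inE E eqxx.
have : 0 < #|[set k | c k == (true, true)]| by rewrite Em.
case/card_gt0P => k; rewrite inE => /eqP Hk.
pose c1 := [ffun k' => if k' == k then (false, false) else c k'].
have Hc1 : c1 k = (false, false) by rewrite ffunE eqxx.
have -> : c = upd1 c1 k.
  by apply/ffunP => k'; rewrite !ffunE; case: (k' =P k) => [->|].
rewrite Finv //.
have -> : core (upd1 c1 k) = core c1.
  by apply/ffunP => k'; rewrite !ffunE; case: (k' == k).
apply: IH; apply/eqP; rewrite -eqSS -Em.
rewrite (cardsD1 k [set k0 | c k0 == (true, true)]) inE Hk eqxx /= eqSS.
apply/eqP; apply: eq_card => k'; rewrite !inE ffunE.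
by case: (k' =P k) => [->|]; rewrite ?eqxx.
Qed.

Lemma tops_top n (s : 'S_(n.*2)) : in_R s ->
  tops s = [set top k | k in [set k | top k \in tops s]].
Proof.
move=> HR; apply/setP => i; apply/idP/imsetP => [Hi|[k]]; last by rewrite inE => H ->.
have [Ho _] := in_RP HR (i := i) ltac:(by move: Hi; rewrite inE).
have Ei := top_odd Ho; by exists (pr i); rewrite // inE -Ei.
Qed.

Lemma bots_bot n (s : 'S_(n.*2)) : in_R s ->
  bots s = [set bot k | k in [set k | bot k \in bots s]].
Proof.
move=> HR; apply/setP => i; apply/idP/imsetP => [Hi|[k]]; last by rewrite inE => H ->.
move: (Hi); rewrite in_bots => Hd.
have [_ He] := in_RP HR Hd; rewrite permKV in He.
have Ei := bot_even He; by exists (pr i); rewrite // inE -Ei.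
Qed.

Lemma drop_n1 n (s : 'S_(n.*2)) : in_R s -> drop_num s = n1 (st s).
Proof.
move=> HR; rewrite /drop_num -/(tops s) (tops_top HR) card_imset; last exact: top_inj.
by rewrite /n1; apply: eq_card => k; rewrite !inE ffunE /= ?inE.
Qed.

Lemma drop_n2 n (s : 'S_(n.*2)) : in_R s -> drop_num s = n2 (st s).
Proof.
move=> HR; rewrite /drop_num -/(tops s).
have -> : #|tops s| = #|bots s| by rewrite /bots card_imset //; exact: perm_inj.
rewrite (bots_bot HR) card_imset; last exact: bot_inj.
by rewrite /n2; apply: eq_card => k; rewrite !inE ffunE /= ?inE.
Qed.

Lemma noAB_count n (c : {ffun 'I_n -> bool * bool}) : noAB c -> n1 c + n2 c + nN c = n.
Proof.
move=> /forallP H.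
have E1 := cardsID [set k | (c k).1] [set: 'I_n].
rewrite setTI setTD cardsT card_ord in E1.
have E2 := cardsID [set k | (c k).2] (~: [set k | (c k).1]).
have -> : n2 c = #|~: [set k | (c k).1] :&: [set k | (c k).2]|.
  apply: eq_card => k; rewrite !inE; have := H k; by case: (c k) => [[] []].
have -> : nN c = #|~: [set k | (c k).1] :\: [set k | (c k).2]|.
  apply: eq_card => k; rewrite !inE; by case: (c k) => [[] []].
rewrite /n1 -addnA E2 E1 //.
Qed.

Lemma Fc_count n (c : {ffun 'I_n -> bool * bool}) : noAB c -> Fc c != 0 ->
  nN c = n - (n1 c).*2 /\ (n1 c <= n./2).
Proof.
move=> Hab; rewrite /Fc cards_eq0 => /set0Pn [s]; rewrite inE => /andP [HR /eqP Hst].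
have := noAB_count Hab; rewrite -Hst -drop_n1 // -drop_n2 // => E.
split; first by rewrite -muln2; lia.
move: (drop_num s) (nN (st s)) E => a b E; have H := odd_double_half n; move: (n./2) H => h; case: (odd n) => /= H; rewrite -!muln2 in H E *; lia.
Qed.

Lemma primaryE n (s : 'S_(n.*2)) : primary s = in_R s && noAB (st s).
Proof.
rewrite /primary; case HR: (in_R s) => //=.
apply/forallP/forallP => [H k|H i].
  rewrite ffunE; apply/negP => /eqP [Ht Hb].
  move: Hb; rewrite in_bots => Hb; have := H (top k); move/forallP/(_ ((s^-1)%g (bot k))).
  move: Ht; rewrite inE => -> /=; rewrite Hb /= /Defs.val1 /pos1 permKV ?topE ?botE.
  by move/implyP => /(_ ltac:(lia)); lia.
apply/forallP => j; apply/implyP => /andP [Di Dj]; apply/implyP.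
rewrite /pos1 /Defs.val1 => Hlt.
have [Hoi _] := in_RP HR Di; have [_ Hej] := in_RP HR Dj.
case: (ltnP 2 (i.+1 - (s j).+1)) => // Hle; exfalso.
have Ei : val i = (s j).+1.
  have : val i != (s j).+2.
    by apply/eqP => E; move: Hoi Hej; rewrite E /= negbK => ->.
  move: Hlt Hle; rewrite /=; move: (nat_of_ord i) (nat_of_ord (s j)) => a b'; lia.
have := H (pr i); rewrite ffunE => /eqP; apply.
have Et : top (pr i) = i by rewrite -top_odd.
have Eb : bot (pr i) = s j.
  apply: val_inj => /=; have H2 := odd_double_half i; rewrite Hoi in H2.
  move: (nat_of_ord i)./2 H2 Ei => q H2 Ei; rewrite -!muln2 in H2 *; lia.
by rewrite Et Eb inE Di in_bots permK Dj.
Qed.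

Lemma gammaE n (j : nat) :
  gamma n j = \sum_(c : {ffun 'I_n -> bool * bool} | noAB c && (n1 c == j)) Fc c.
Proof.
rewrite /gamma -sum1_card (partition_big (@st n) predT) //= [RHS]big_mkcond /=.
apply: eq_bigr => c _.
case: ifP => Hc.
  rewrite /Fc -sum1_card; apply: eq_bigl => s; rewrite !inE primaryE.
  case HR: (in_R s) => //=; rewrite drop_n1 //.
  by case: (st s =P c) => [->|_]; rewrite ?andbT ?andbF // Hc.
rewrite big_pred0 // => s; rewrite !inE primaryE.
case HR: (in_R s) => //=; rewrite drop_n1 //.
by case: (st s =P c) => [->|_]; rewrite ?andbT ?andbF // Hc.
Qed.



Local Open Scope ring_scope.

Definition phi (a b : bool * bool) : {poly int} :=
  if (if b == (true, true) then (false, false) else b) == a then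
    (if b.1 then 'X else 1) else 0.

Lemma prod_if (I : finType) (P : pred I) (x : {poly int}) :
  \prod_(k : I) (if P k then x else 1) = x ^+ #|[set k | P k]|.
Proof.
rewrite -big_mkcond -prodr_const; apply: eq_bigl => k; by rewrite inE.
Qed.

Lemma inner_sum n (c0 : {ffun 'I_n -> bool * bool}) : noAB c0 ->
  \sum_(c | core c == c0) 'X ^+ n1 c = 'X ^+ n1 c0 * (1 + 'X) ^+ nN c0 :> {poly int}.
Proof.
move=> /forallP Hab.
transitivity (\sum_(c : {ffun 'I_n -> bool * bool}) \prod_k phi (c0 k) (c k)).
  rewrite big_mkcond; apply: eq_bigr => c _.
  case: eqP => [Ec|Ec].
    rewrite /n1 -prod_if; apply: eq_bigr => k _.
    rewrite /phi; move/ffunP: Ec => /(_ k); rewrite ffunE => ->.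
    by rewrite eqxx.
  have [k Hk] : exists k, core c k != c0 k.
    apply/existsP; rewrite -negb_forall; apply/negP => /forallP H.
    by apply: Ec; apply/ffunP => k; apply/eqP.
  rewrite (bigD1 k) //= /phi; move: Hk; rewrite ffunE => /negbTE ->.
  by rewrite mul0r.
rewrite -(@bigA_distr_bigA _ _ _ _ _ _ _ (fun (k : 'I_n) (b : bool * bool) => phi (c0 k) b)) /=.
transitivity (\prod_k ((if (c0 k).1 then 'X else 1) *
     (if ~~ (c0 k).1 && ~~ (c0 k).2 then 1 + 'X else 1)) : {poly int}).
  apply: eq_bigr => k _.
  have Hk := Hab k.
  rewrite (eq_bigr (fun p : bool * bool => phi (c0 k) (p.1, p.2))); last by case.
  rewrite -(pair_bigA _ (fun b1 b2 => phi (c0 k) (b1, b2))) /= !big_bool /= /phi.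
  move: Hk; case: (c0 k) => [[] []] //= _; rewrite ?eqxx /=.
  1-3: by rewrite ?(add0r, addr0, mulr1, mul1r) // addrC.
by rewrite (big_split (R := {poly int})) /= !prod_if.
Qed.
Lemma LHS_E n :
  \sum_(s : 'S_(n.*2) | in_R s) ('X ^+ drop_num s : {poly int})
  = \sum_(c : {ffun 'I_n -> bool * bool} | noAB c)
       (Fc c)%:R * 'X ^+ n1 c * (1 + 'X) ^+ nN c.
Proof.
rewrite (partition_big (@st n) predT) //=.
transitivity (\sum_(c : {ffun 'I_n -> bool * bool}) (Fc c)%:R * ('X ^+ n1 c : {poly int})).
  apply: eq_bigr => c _.
  transitivity (\sum_(s in [set s : 'S_(n.*2) | in_R s & st s == c]) ('X ^+ n1 c : {poly int})).
    apply: eq_big => s; first by rewrite inE.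
    by case/andP => HR /eqP <-; rewrite drop_n1.
  by rewrite sumr_const mulr_natl.
rewrite (partition_big (@core n) (@noAB n)) /=; last first.
  by move=> c _; apply/forallP => k; rewrite ffunE; case: ifP => // /negbT.
apply: eq_bigr => c0 Hc0.
transitivity (\sum_(c | core c == c0) (Fc c0)%:R * ('X ^+ n1 c : {poly int})).
  by apply: eq_bigr => c /eqP <-; rewrite F_core.
by rewrite -mulr_sumr inner_sum // mulrA.
Qed.

Theorem mainTheorem6 (n : nat) (hn : (1 <= n)%N) :
  \sum_(s : 'S_(n.*2) | in_R s) ('X ^+ drop_num s : {poly int})
  = \sum_(j < n./2.+1)
      (gamma n j)%:R * 'X ^+ j * (1 + 'X) ^+ (n - j.*2)%N.
Proof.
rewrite LHS_E.
set G := fun c : {ffun 'I_n -> bool * bool} =>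
   ((Fc c)%:R * 'X ^+ n1 c * (1 + 'X) ^+ nN c : {poly int}).
have G0 c : noAB c -> Fc c = 0%N -> G c = 0 by move=> _ H; rewrite /G H !mul0r.
rewrite (bigID (fun c => n1 c <= n./2)%N) /= [X in _ + X]big1 ?addr0; last first.
  move=> c /andP [Hab Hn]; apply: G0 => //; apply/eqP; apply: contraNT Hn => HF.
  by have [_ ->] := Fc_count Hab HF.
rewrite (partition_big (fun c => inord (n1 c) : 'I_(n./2.+1)) predT) //=.
apply: eq_bigr => j _.
rewrite gammaE natr_sum !mulr_suml.
apply: eq_big => [c|c /andP [/andP [Hab Hle] /eqP Hj]].
  case Hab: (noAB c) => //=; case Hn: (n1 c <= n./2)%N => /=.
    by rewrite -val_eqE /= inordK.
  apply/esym/negbTE; apply: contraFN Hn => /eqP ->; rewrite -ltnS; exact: ltn_ord.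
have Hj' : (j : nat) = n1 c by rewrite -Hj inordK // ltnS.
rewrite /G Hj'; case: (eqVneq (Fc c) 0%N) => [->|HF]; first by rewrite !mul0r.
by have [-> _] := Fc_count Hab HF.
Qed.
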